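(* For every $n\in\mathbb{N}$, the set $ISD(\mathbb{R}^n)$, equipped with pointwise addition, pointwise multiplication, pointwise $\min$ (as $\wedge$) and pointwise $\max$ (as $\vee$), is an $f$-ring. In particular it is closed under pointwise sums and products.
   Context: $ISD(\mathbb{R}^n)$ is the smallest set of functions $\mathbb{R}^n \to \mathbb{R}$ containing all real polynomials in $n$ variables and closed under pointwise $\min$ and $\max$. An $\ell$-ring is a ring with identity (commutative addition) that is also a lattice with operations $\wedge,\vee$ (with $f\le g$ meaning $f\wedge g=f$) such that $f\le g$ implies $h+f\le h+g$ for all $h$, and $f,g\ge0$ implies $fg\ge0$. An $f$-ring is an $\ell$-ring such that whenever $f,g,h\ge0$ and $g\wedge h=0$, one has $fg\wedge h=0$ and $gf\wedge h=0$. *)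

(* Defs.v *)
From HB Require Import structures.
From mathcomp Require Import all_boot all_order all_algebra.
From mathcomp Require Import reals.
From mathcomp Require Import mpoly.
Set Implicit Arguments. Unset Strict Implicit. Unset Printing Implicit Defensive.
Import Order.TTheory GRing.Theory Num.Theory.
Local Open Scope ring_scope.

Inductive ISD (R : realType) (n : nat) : (('I_n -> R) -> R) -> Prop :=
  | ISD_poly (p : {mpoly R[n]}) : ISD (fun x => p.@[x])
  | ISD_min f g : ISD f -> ISD g -> ISD (fun x => Num.min (f x) (g x))
  | ISD_max f g : ISD f -> ISD g -> ISD (fun x => Num.max (f x) (g x)).

Definition is_lring (T : Type) (zero one : T) (add mul : T -> T -> T)
    (opp : T -> T) (meet join : T -> T -> T) : Prop :=
  let le := fun f g => meet f g = f in
  (forall f g h, add f (add g h) = add (add f g) h) /\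
  (forall f g, add f g = add g f) /\
  (forall f, add zero f = f) /\
  (forall f, add (opp f) f = zero) /\
  (forall f g h, mul f (mul g h) = mul (mul f g) h) /\
  (forall f, mul one f = f) /\
  (forall f, mul f one = f) /\
  (forall f g h, mul f (add g h) = add (mul f g) (mul f h)) /\
  (forall f g h, mul (add f g) h = add (mul f h) (mul g h)) /\
  (forall f g, meet f g = meet g f) /\
  (forall f g, join f g = join g f) /\
  (forall f g h, meet f (meet g h) = meet (meet f g) h) /\
  (forall f g h, join f (join g h) = join (join f g) h) /\
  (forall f g, meet f (join f g) = f) /\
  (forall f g, join f (meet f g) = f) /\
  (forall f g h, le f g -> le (add h f) (add h g)) /\
  (forall f g, le zero f -> le zero g -> le zero (mul f g)).

Definition is_fring (T : Type) (zero one : T) (add mul : T -> T -> T)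
    (opp : T -> T) (meet join : T -> T -> T) : Prop :=
  is_lring zero one add mul opp meet join /\
  let le := fun f g => meet f g = f in
  forall f g h, le zero f -> le zero g -> le zero h -> meet g h = zero ->
    meet (mul f g) h = zero /\ meet (mul g f) h = zero.

(* Main.v *)
Require Import Defs.
From HB Require Import structures.
From mathcomp Require Import all_boot all_order all_algebra.
From mathcomp Require Import reals.
From mathcomp Require Import mpoly.
From mathcomp Require Import ring lra.
From Stdlib Require Import FunctionalExtensionality ProofIrrelevance.
Import Order.TTheory GRing.Theory Num.Theory.
Local Open Scope ring_scope.

Ltac noMM t := lazymatch t with
  | context [Order.max _ _] => fail
  | context [Order.min _ _] => fail
  | _ => idtac end.
Ltac mm1 := match goal with
  | |- context [Order.max ?a ?b] => noMM a; noMM b;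
      rewrite (maxEle a b); case: (leP a b) => ?
  | |- context [Order.min ?a ?b] => noMM a; noMM b;
      rewrite (minEle a b); case: (leP a b) => ?
  end.
Ltac mm := repeat mm1; intros; nra.

Section S.
Set Implicit Arguments.
Variables (R : realType) (n : nat).
Notation fn := (('I_n -> R) -> R).

Lemma ISD_ext {f g : fn} : ISD f -> (forall x, f x = g x) -> ISD g.
Proof. by move=> H E; have -> : g = f by apply: functional_extensionality => x; rewrite E. Qed.

Lemma ISD_neg (f : fn) : ISD f -> ISD (fun x => - f x).
Proof.
elim=> [p|f1 f2 _ H1 _ H2|f1 f2 _ H1 _ H2].
- by apply: (ISD_ext (ISD_poly (- p))) => x; rewrite mevalN.
- by apply: (ISD_ext (ISD_max H1 H2)) => x; mm.
- by apply: (ISD_ext (ISD_min H1 H2)) => x; mm.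
Qed.

Lemma ISD_add (f g : fn) : ISD f -> ISD g -> ISD (fun x => f x + g x).
Proof.
move=> Hf; elim: Hf g => [p|f1 f2 _ H1 _ H2|f1 f2 _ H1 _ H2] g Hg.
- elim: Hg => [q|g1 g2 _ H1 _ H2|g1 g2 _ H1 _ H2].
  + by apply: (ISD_ext (ISD_poly (p + q))) => x; rewrite mevalD.
  + by apply: (ISD_ext (ISD_min H1 H2)) => x; mm.
  + by apply: (ISD_ext (ISD_max H1 H2)) => x; mm.
- by apply: (ISD_ext (ISD_min (H1 _ Hg) (H2 _ Hg))) => x; mm.
- by apply: (ISD_ext (ISD_max (H1 _ Hg) (H2 _ Hg))) => x; mm.
Qed.

Inductive Pos : fn -> Prop :=
  | Pos_base (p : {mpoly R[n]}) : Pos (fun x => Num.max (p.@[x]) 0)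
  | Pos_min f g : Pos f -> Pos g -> Pos (fun x => Num.min (f x) (g x))
  | Pos_max f g : Pos f -> Pos g -> Pos (fun x => Num.max (f x) (g x)).

Arguments Pos_min {f g}. Arguments Pos_max {f g}.

Lemma Pos_ISD f : Pos f -> ISD f.
Proof.
elim=> [p|f1 f2 _ H1 _ H2|f1 f2 _ H1 _ H2].
- by apply: (ISD_ext (ISD_max (ISD_poly p) (ISD_poly 0))) => x; rewrite meval0.
- exact: ISD_min.
- exact: ISD_max.
Qed.

Lemma Pos_ge0 f : Pos f -> forall x, 0 <= f x.
Proof. elim=> [p|f1 f2 _ H1 _ H2|f1 f2 _ H1 _ H2] x.
- by rewrite le_max lexx orbT.
- by rewrite le_min H1 H2.
- by rewrite le_max H1.
Qed.



Lemma Pos_ext {f g : fn} : Pos f -> (forall x, f x = g x) -> Pos g.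
Proof. by move=> H E; have -> : g = f by apply: functional_extensionality => x; rewrite E. Qed.

Lemma ISD_Pos f : ISD f -> Pos (fun x => Num.max (f x) 0).
Proof.
elim=> [p|f1 f2 _ H1 _ H2|f1 f2 _ H1 _ H2].
- exact: Pos_base.
- by apply: (Pos_ext (Pos_min H1 H2)) => x; mm.
- by apply: (Pos_ext (Pos_max H1 H2)) => x; mm.
Qed.

Lemma base_mul (a b : R) :
  Num.max a 0 * Num.max b 0 =
  Num.min (Num.max (a * b) 0)
          (Num.max ((a + b) ^+ 3 + (a + b)) 0).
Proof.
repeat mm1; nra.
Qed.

Lemma Pos_mul f g : Pos f -> Pos g -> Pos (fun x => f x * g x).
Proof.
move=> Hf; elim: Hf g => [p|f1 f2 H1' H1 H2' H2|f1 f2 H1' H1 H2' H2] g Hg.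
- elim: Hg => [q|g1 g2 G1 IH1 G2 IH2|g1 g2 G1 IH1 G2 IH2].
  + apply: (Pos_ext (Pos_min (Pos_base (p * q))
                             (Pos_base ((p + q) ^+ 3 + (p + q))))) => x.
    by rewrite base_mul mevalD mevalM rmorphXn /= mevalD.
  + apply: (Pos_ext (Pos_min IH1 IH2)) => x.
    have h0 : 0 <= Num.max p.@[x] 0 by rewrite le_max lexx orbT.
    have := Pos_ge0 G1 x; have := Pos_ge0 G2 x; move: h0.
    set a := Num.max _ _; move=> *; mm.
  + apply: (Pos_ext (Pos_max IH1 IH2)) => x.
    have h0 : 0 <= Num.max p.@[x] 0 by rewrite le_max lexx orbT.
    have := Pos_ge0 G1 x; have := Pos_ge0 G2 x; move: h0.
    set a := Num.max _ _; move=> *; mm.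
- apply: (Pos_ext (Pos_min (H1 _ Hg) (H2 _ Hg))) => x.
  have := Pos_ge0 Hg x; have := Pos_ge0 H1' x; have := Pos_ge0 H2' x.
  move=> *; mm.
- apply: (Pos_ext (Pos_max (H1 _ Hg) (H2 _ Hg))) => x.
  have := Pos_ge0 Hg x; have := Pos_ge0 H1' x; have := Pos_ge0 H2' x.
  move=> *; mm.
Qed.

Lemma ISD_mul (f g : fn) : ISD f -> ISD g -> ISD (fun x => f x * g x).
Proof.
move=> Hf Hg.
have Pf := ISD_Pos Hf; have Nf := ISD_Pos (ISD_neg Hf).
have Pg := ISD_Pos Hg; have Ng := ISD_Pos (ISD_neg Hg).
have A := Pos_ISD (Pos_mul Pf Pg); have B := Pos_ISD (Pos_mul Pf Ng).
have C := Pos_ISD (Pos_mul Nf Pg); have D := Pos_ISD (Pos_mul Nf Ng).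
apply: (ISD_ext (ISD_add (ISD_add A (ISD_neg B)) (ISD_add (ISD_neg C) D))) => x.
have ef : f x = Num.max (f x) 0 - Num.max (- f x) 0 by mm.
have eg : g x = Num.max (g x) 0 - Num.max (- g x) 0 by mm.
rewrite [in RHS]ef [in RHS]eg; ring.
Qed.

End S.

Lemma rcompat (R : realType) (a b c : R) :
  Num.min a b = a -> Num.min (c + a) (c + b) = c + a.
Proof. by move/min_idPl => h; apply/min_idPl; rewrite lerD2l. Qed.

Lemma rpos (R : realType) (a b : R) :
  Num.min 0 a = 0 -> Num.min 0 b = 0 -> Num.min 0 (a * b) = 0.
Proof. by move/min_idPl => ha /min_idPl hb; apply/min_idPl; rewrite mulr_ge0. Qed.

Lemma rfring (R : realType) (a b c : R) :
  Num.min 0 a = 0 -> Num.min 0 b = 0 -> Num.min 0 c = 0 -> Num.min b c = 0 ->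
  Num.min (a * b) c = 0 /\ Num.min (b * a) c = 0.
Proof.
move/min_idPl => ha /min_idPl hb /min_idPl hc.
case: (boolP (b <= c)) => hbc.
- rewrite minEle hbc => ->; rewrite mulr0 mul0r; split; exact/min_idPl.
- rewrite minEle (negbTE hbc) => E; rewrite E.
  by rewrite -ltNge in hbc; split; apply/min_idPr; rewrite mulr_ge0.
Qed.

Lemma sig_ext (R : realType) (n : nat) (a b : {f | ISD (R := R) (n := n) f}) :
  proj1_sig a = proj1_sig b -> a = b.
Proof.
case: a => a Ha; case: b => b Hb /= E; subst b.
by rewrite (proof_irrelevance _ Ha Hb).
Qed.

Theorem mainTheorem7 (R : realType) (n : nat) :
  exists (zero one : {f | ISD (R := R) (n := n) f})
         (add mul meet join : {f | ISD f} -> {f | ISD f} -> {f | ISD f})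
         (opp : {f | ISD f} -> {f | ISD f}),
    proj1_sig zero = (fun _ => 0) /\
        proj1_sig one = (fun _ => 1) /\
        (forall f g, proj1_sig (add f g) = (fun x => proj1_sig f x + proj1_sig g x)) /\
        (forall f g, proj1_sig (mul f g) = (fun x => proj1_sig f x * proj1_sig g x)) /\
        (forall f, proj1_sig (opp f) = (fun x => - proj1_sig f x)) /\
        (forall f g, proj1_sig (meet f g) = (fun x => Num.min (proj1_sig f x) (proj1_sig g x))) /\
        (forall f g, proj1_sig (join f g) = (fun x => Num.max (proj1_sig f x) (proj1_sig g x))) /\
      is_fring zero one add mul opp meet join.
Proof.
have Z : ISD (R := R) (n := n) (fun _ => 0).
  by apply: (ISD_ext (ISD_poly 0)) => x; rewrite meval0.
have O : ISD (R := R) (n := n) (fun _ => 1).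
  by apply: (ISD_ext (ISD_poly 1)) => x; rewrite meval1.
pose T := {f | ISD (R := R) (n := n) f}.
exists (exist _ _ Z), (exist _ _ O).
exists (fun f g : T => exist _ _ (ISD_add (proj2_sig f) (proj2_sig g))).
exists (fun f g : T => exist _ _ (ISD_mul (proj2_sig f) (proj2_sig g))).
exists (fun f g : T => exist _ _ (ISD_min (proj2_sig f) (proj2_sig g))).
exists (fun f g : T => exist _ _ (ISD_max (proj2_sig f) (proj2_sig g))).
exists (fun f : T => exist _ _ (ISD_neg (proj2_sig f))).
do 7 (split; first by []).
have FE : forall (f g : T), (forall x, proj1_sig f x = proj1_sig g x) -> f = g.
  by move=> f g E; apply: sig_ext; apply: functional_extensionality.
have PW : forall (f g : T), f = g -> forall x, proj1_sig f x = proj1_sig g x.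
  by move=> f g ->.
rewrite /is_fring /is_lring; cbv zeta.
split; first (repeat split).
all: intros; try split.
all: try (apply: FE => x /=).
all: repeat match goal with H : _ = _ |- _ => have {H} := PW _ _ H x; simpl => H end.
all: try (mm || ring).
- exact: rcompat.
- exact: rpos.
- by case: (rfring _ _ _ _ H H0 H1 H2).
- by case: (rfring _ _ _ _ H H0 H1 H2).
Qed.
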